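(* Let $\mathcal{C}$ be a category, $J$ a directed partially ordered set, and let $\boldsymbol{X}=(X_\lambda,p_{\lambda\lambda'},\Lambda)$ and $\boldsymbol{Y}=(Y_\mu,q_{\mu\mu'},M)$ be inverse systems in $\mathcal{C}$ with $M$ cofinite. Then every morphism $\boldsymbol{f}=[(f,f^j_\mu)]:\boldsymbol{X}\to\boldsymbol{Y}$ of $pro^J$-$\mathcal{C}$ admits a simple representative $(f',f'^j_\mu):\boldsymbol{X}\to\boldsymbol{Y}$.
   Context: An inverse system $\boldsymbol{X}=(X_\lambda,p_{\lambda\lambda'},\Lambda)$ in $\mathcal{C}$: $\Lambda$ directed preordered, morphisms $p_{\lambda\lambda'}:X_{\lambda'}\to X_\lambda$ for $\lambda\le\lambda'$, $p_{\lambda\lambda}=1$, $p_{\lambda\lambda'}p_{\lambda'\lambda''}=p_{\lambda\lambda''}$. A directed set is cofinite if each element has finitely many predecessors. A $J$-morphism $(f,f^j_\mu):\boldsymbol{X}\to\boldsymbol{Y}$: $f:M\to\Lambda$ and $\mathcal{C}$-morphisms $f^j_\mu:X_{f(\mu)}\to Y_\mu$ ($\mu\in M$, $j\in J$) such that for all $\mu\le\mu'$ there exist $\lambda\ge f(\mu),f(\mu')$ and $j_0$ with $f^{j'}_\mu p_{f(\mu)\lambda}=q_{\mu\mu'}f^{j'}_{\mu'}p_{f(\mu')\lambda}$ for all $j'\ge j_0$. It is simple if $f$ is increasing and for every $\mu\le\mu'$ one may take $\lambda=f(\mu')$. $(f,f^j_\mu)\sim(f',f'^j_\mu)$ iff for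 every $\mu$ there exist $\lambda\ge f(\mu),f'(\mu)$ and $j_0$ with $f^{j'}_\mu p_{f(\mu)\lambda}=f'^{j'}_\mu p_{f'(\mu)\lambda}$ for all $j'\ge j_0$. $pro^J$-$\mathcal{C}$ is the category of inverse systems and $\sim$-classes of $J$-morphisms, composition $(g,g^j_\nu)(f,f^j_\mu)=(fg,g^j_\nu f^j_{g(\nu)})$. *)

(* Defs.v *)
From Stdlib Require Import List.
Set Implicit Arguments.
Unset Strict Implicit.

Record Category := {
  Ob :> Type;
  Hom : Ob -> Ob -> Type;
  comp : forall {x y z : Ob}, Hom y z -> Hom x y -> Hom x z;
  idm : forall a : Ob, Hom a a;
  comp_assoc : forall a b c d (h : Hom c d) (g : Hom b c) (f : Hom a b),
      comp h (comp g f) = comp (comp h g) f;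
  comp_id_l : forall a b (f : Hom a b), comp (idm b) f = f;
  comp_id_r : forall a b (f : Hom a b), comp f (idm a) = f
}.
Arguments Hom {c} _ _ : rename.
Arguments comp {c x y z} _ _ : rename.
Arguments idm {c} _ : rename.

Record DirPreorder := {
  Idx :> Type;
  dle : Idx -> Idx -> Prop;
  dle_refl : forall x, dle x x;
  dle_trans : forall x y z, dle x y -> dle y z -> dle x z;
  dle_directed : forall x y, exists z, dle x z /\ dle y z
}.
Arguments dle {d} _ _ : rename.

Record DirPoset := {
  dp :> DirPreorder;
  dle_antisym : forall x y : dp, dle x y -> dle y x -> x = y
}.

Definition cofinite (M : DirPreorder) : Prop :=
  forall m : M, exists l : list M, forall m' : M, dle m' m -> In m' l.

Record InvSys (C : Category) := {
  ind : DirPreorder;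
  obj : ind -> Ob C;
  bond : forall l l' : ind, dle l l' -> Hom (obj l') (obj l);
  bond_id : forall (l : ind) (h : dle l l), bond h = idm (obj l);
  bond_comp : forall (l l' l'' : ind) (h1 : dle l l') (h2 : dle l' l'')
      (h3 : dle l l''), comp (bond h1) (bond h2) = bond h3
}.
Arguments ind {C} _.
Arguments obj {C} _ _.
Arguments bond {C} _ {l l'} _.

Record JData (C : Category) (J : DirPoset) (X Y : InvSys C) := {
  jmap : ind Y -> ind X;
  jcomp : forall (j : J) (mu : ind Y), Hom (obj X (jmap mu)) (obj Y mu)
}.
Arguments jmap {C J X Y} _ _.
Arguments jcomp {C J X Y} _ _ _.

Definition is_Jmorphism {C : Category} {J : DirPoset} {X Y : InvSys C}
    (F : JData J X Y) : Prop :=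
  forall (mu mu' : ind Y) (h : dle mu mu'),
    exists (lam : ind X) (h1 : dle (jmap F mu) lam) (h2 : dle (jmap F mu') lam)
           (j0 : J),
      forall j' : J, dle j0 j' ->
        comp (jcomp F j' mu) (bond X h1)
        = comp (bond Y h) (comp (jcomp F j' mu') (bond X h2)).

Definition is_simple {C : Category} {J : DirPoset} {X Y : InvSys C}
    (F : JData J X Y) : Prop :=
  is_Jmorphism F /\
  (forall mu mu' : ind Y, dle mu mu' -> dle (jmap F mu) (jmap F mu')) /\
  (forall (mu mu' : ind Y) (h : dle mu mu') (h1 : dle (jmap F mu) (jmap F mu')),
     exists j0 : J, forall j' : J, dle j0 j' ->
       comp (jcomp F j' mu) (bond X h1)
       = comp (bond Y h) (jcomp F j' mu')).

Definition Jsim {C : Category} {J : DirPoset} {X Y : InvSys C}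
    (F G : JData J X Y) : Prop :=
  forall mu : ind Y,
    exists (lam : ind X) (h1 : dle (jmap F mu) lam) (h2 : dle (jmap G mu) lam)
           (j0 : J),
      forall j' : J, dle j0 j' ->
        comp (jcomp F j' mu) (bond X h1) = comp (jcomp G j' mu) (bond X h2).

(* Main.v *)
Require Import Defs.
From Stdlib Require Import List Lia Classical ClassicalEpsilon FunctionalExtensionality PropExtensionality.

Lemma bond_pi (C : Category) (X : InvSys C) (l l' : ind X) (h h' : dle l l') :
  bond X h = bond X h'.
Proof.
  rewrite <- (bond_comp h (dle_refl l') h'). rewrite bond_id, comp_id_r. reflexivity.
Qed.

Fixpoint cnt {A : Type} (P : A -> Prop) (l : list A) : nat :=
  match l with
  | nil => 0
  | a :: l => (if excluded_middle_informative (P a) then 1 else 0) + cnt P l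
  end.

Lemma cnt_le {A} (P Q : A -> Prop) l : (forall x, P x -> Q x) -> cnt P l <= cnt Q l.
Proof.
  intro H; induction l as [|a l IH]; simpl; [lia|].
  destruct (excluded_middle_informative (P a)), (excluded_middle_informative (Q a));
  try lia. exfalso; auto.
Qed.

Lemma cnt_lt {A} (P Q : A -> Prop) l a : (forall x, P x -> Q x) -> In a l -> Q a -> ~ P a ->
  cnt P l < cnt Q l.
Proof.
  intros H Hin Hq Hp; induction l as [|b l IH]; simpl in *; [contradiction|].
  pose proof (cnt_le P Q l H).
  destruct Hin as [->|Hin].
  - destruct (excluded_middle_informative (P a)), (excluded_middle_informative (Q a));
    try lia; contradiction.
  - specialize (IH Hin).
    destruct (excluded_middle_informative (P b)), (excluded_middle_informative (Q b));
    try lia. exfalso; auto.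
Qed.

Lemma wf_R (M : DirPreorder) (hM : cofinite M) :
  well_founded (fun nu mu : M => dle nu mu /\ ~ dle mu nu).
Proof.
  intro mu. destruct (hM mu) as [L HL].
  assert (K : forall n (nu : M), (forall x, dle x nu -> In x L) ->
             cnt (fun x => dle x nu) L < n ->
             Acc (fun nu mu : M => dle nu mu /\ ~ dle mu nu) nu).
  { induction n as [|n IH]; intros nu H1 H2; [lia|].
    constructor. intros nu' [h1 h2]. apply IH.
    - intros x hx. apply H1. eapply dle_trans; eauto.
    - assert (cnt (fun x => dle x nu') L < cnt (fun x => dle x nu) L); [|lia].
      apply cnt_lt with nu.
      + intros x hx; eapply dle_trans; eauto.
      + apply H1, dle_refl.
      + apply dle_refl.
      + exact h2. }
  apply (K (S (cnt (fun x => dle x mu) L))); auto.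
Qed.

Lemma ub_list (D : DirPreorder) {A} (phi : A -> D) (l : list A) (d : D) :
  exists u, dle d u /\ forall x, In x l -> dle (phi x) u.
Proof.
  induction l as [|a l IH].
  - exists d; split; [apply dle_refl|intros x []].
  - destruct IH as [u [Hu1 Hu2]]. destruct (dle_directed u (phi a)) as [z [z1 z2]].
    exists z; split; [eapply dle_trans; eauto|].
    intros x [<-|Hx]; auto. eapply dle_trans; eauto.
Qed.

Lemma choice1 {A B} (R : A -> B -> Prop) :
  (forall a, exists b, R a b) -> exists f, forall a, R a (f a).
Proof.
  intro H. exists (fun a => proj1_sig (constructive_indefinite_description _ (H a))).
  intro a. exact (proj2_sig (constructive_indefinite_description _ (H a))).
Qed.

Lemma choice2 {A B D} (R : A -> B -> D -> Prop) :
  (forall a b, exists c, R a b c) -> exists f, forall a b, R a b (f a b).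
Proof.
  intro H.
  exists (fun a b => proj1_sig (constructive_indefinite_description _ (H a b))).
  intros a b. exact (proj2_sig (constructive_indefinite_description _ (H a b))).
Qed.

Theorem lemma6 (C : Category) (J : DirPoset) (X Y : InvSys C)
    (hM : cofinite (ind Y)) (F : JData J X Y) (hF : is_Jmorphism F) :
  exists F' : JData J X Y, is_Jmorphism F' /\ is_simple F' /\ Jsim F F'.
Proof.
  assert (HL : forall mu mu' : ind Y, exists lam : ind X, dle mu mu' ->
     exists (h1 : dle (jmap F mu) lam) (h2 : dle (jmap F mu') lam) (j0 : J),
       forall j', dle j0 j' -> forall h : dle mu mu',
         comp (jcomp F j' mu) (bond X h1)
         = comp (bond Y h) (comp (jcomp F j' mu') (bond X h2))).
  { intros mu mu'. destruct (classic (dle mu mu')) as [h|nh].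
    - destruct (hF mu mu' h) as (lam & h1 & h2 & j0 & E).
      exists lam; intros _; exists h1, h2, j0; intros j' hj h'.
      rewrite (bond_pi _ Y _ _ h' h). auto.
    - exists (jmap F mu). intros h; contradiction. }
  destruct (choice2 _ HL) as [Lam HLam]. clear HL.
  assert (Hb : forall nu : ind Y, exists l : ind X,
             dle (jmap F nu) l /\ forall k, dle k nu -> dle (Lam k nu) l).
  { intro nu. destruct (hM nu) as [Ln HLn].
    destruct (ub_list _ (fun k => Lam k nu) Ln (jmap F nu)) as [u [Hu1 Hu2]].
    exists u; split; auto. }
  destruct (choice1 _ Hb) as [b Hbs]. clear Hb.
  pose (R := fun nu mu : ind Y => dle nu mu /\ ~ dle mu nu).
  pose (Pr := fun (mu : ind Y) (g : forall nu, R nu mu -> ind X) (l : ind X) =>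
     (forall nu, dle nu mu -> dle (b nu) l) /\ (forall nu (h : R nu mu), dle (g nu h) l)).
  pose (Fn := fun mu g => epsilon (inhabits (jmap F mu)) (Pr mu g)).
  pose (f' := Fix (wf_R _ hM) (fun _ => ind X) Fn).
  assert (Heq : forall mu, f' mu = Fn mu (fun nu _ => f' nu)).
  { intro mu. refine (Fix_eq (wf_R _ hM) (fun _ => ind X) Fn _ mu).
    intros x g1 g2 E.
    assert (g1 = g2) as ->; [|reflexivity].
    apply functional_extensionality_dep; intro y.
    apply functional_extensionality_dep; intro p. apply E. }
  assert (Hspec : forall mu, (forall nu, dle nu mu -> dle (b nu) (f' mu)) /\
                            (forall nu, R nu mu -> dle (f' nu) (f' mu))).
  { intro mu.
    assert (Pr mu (fun nu _ => f' nu) (f' mu)) as [A B]; [|split; [exact A| exact B]].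
    rewrite (Heq mu). unfold Fn. apply epsilon_spec.
    destruct (hM mu) as [Ln HLn].
    destruct (ub_list _ b Ln (jmap F mu)) as [u1 [_ Hu1]].
    destruct (ub_list _ f' Ln (jmap F mu)) as [u2 [_ Hu2]].
    destruct (dle_directed u1 u2) as [z [z1 z2]].
    exists z; split.
    - intros nu hnu. eapply dle_trans; [apply Hu1, HLn, hnu| exact z1].
    - intros nu [hnu _]. eapply dle_trans; [apply Hu2, HLn, hnu| exact z2]. }
  assert (Hequiv : forall mu mu', dle mu mu' -> dle mu' mu -> f' mu = f' mu').
  { intros mu mu' h1 h2. rewrite (Heq mu), (Heq mu'). unfold Fn.
    rewrite (proof_irrelevance _ (inhabits (jmap F mu)) (inhabits (jmap F mu'))).
    f_equal. unfold Pr. apply functional_extensionality; intro l.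
    apply propositional_extensionality. unfold R.
    split; intros [A B]; split.
    - intros nu hnu. apply A. eapply dle_trans; eauto.
    - intros nu [k1 k2]. apply (B nu). split.
      + eapply dle_trans; eauto.
      + intro k. apply k2. eapply dle_trans; eauto.
    - intros nu hnu. apply A. eapply dle_trans; eauto.
    - intros nu [k1 k2]. apply (B nu). split.
      + eapply dle_trans; eauto.
      + intro k. apply k2. eapply dle_trans; eauto. }
  assert (Hmono : forall mu mu', dle mu mu' -> dle (f' mu) (f' mu')).
  { intros mu mu' h. destruct (classic (dle mu' mu)) as [h'|h'].
    - rewrite (Hequiv mu mu' h h'). apply dle_refl.
    - apply (proj2 (Hspec mu')). split; auto. }
  assert (ha : forall mu, dle (jmap F mu) (f' mu)).
  { intro mu. eapply dle_trans; [apply (proj1 (Hbs mu))|].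
    apply (proj1 (Hspec mu)), dle_refl. }
  assert (hlam : forall mu mu', dle mu mu' -> dle (Lam mu mu') (f' mu')).
  { intros mu mu' h. eapply dle_trans; [apply (proj2 (Hbs mu')), h|].
    apply (proj1 (Hspec mu')), dle_refl. }
  pose (F' := {| jmap := f'; jcomp := fun j mu => comp (jcomp F j mu) (bond X (ha mu)) |}
        : JData J X Y).
  assert (Hs3 : forall (mu mu' : ind Y) (h : dle mu mu') (h1 : dle (jmap F' mu) (jmap F' mu')),
     exists j0 : J, forall j' : J, dle j0 j' ->
       comp (jcomp F' j' mu) (bond X h1) = comp (bond Y h) (jcomp F' j' mu')).
  { intros mu mu' h h1. destruct (HLam mu mu' h) as (hl1 & hl2 & j0 & E).
    exists j0. intros j' hj. simpl in *.
    pose proof (hlam mu mu' h) as hlm.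
    rewrite <- comp_assoc.
    rewrite (bond_comp (ha mu) h1 (dle_trans hl1 hlm)).
    rewrite <- (bond_comp hl1 hlm (dle_trans hl1 hlm)).
    rewrite comp_assoc. rewrite (E j' hj h).
    rewrite <- !comp_assoc. rewrite (bond_comp hl2 hlm (ha mu')). reflexivity. }
  assert (HJ : is_Jmorphism F').
  { intros mu mu' h. exists (f' mu'), (Hmono mu mu' h), (dle_refl (f' mu')).
    destruct (Hs3 mu mu' h (Hmono mu mu' h)) as [j0 E]. exists j0.
    intros j' hj. rewrite bond_id, comp_id_r. exact (E j' hj). }
  exists F'. split; [exact HJ|]. split; [split; [exact HJ| split; [exact Hmono| exact Hs3]]|].
  intro mu. exists (f' mu), (ha mu), (dle_refl (f' mu)).
  destruct (hF mu mu (dle_refl mu)) as (_ & _ & _ & j0 & _).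
  exists j0. intros j' _. simpl. rewrite bond_id, comp_id_r. reflexivity.
Qed.
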